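(* Let $\mathrm b_1,\mathrm b_2$ be two profiles, and let $L^{\mathrm b_1},L^{\mathrm b_2}$ be constructed from the same environment $\omega$. Let $k\le l$ be integers and $n\ge 1$. If $Z^{\mathrm b_1}[l]_n\le Z^{\mathrm b_2}[k]_n$, then $$L^{\mathrm b_1}[l]_n-L^{\mathrm b_1}[k]_n\le L^{\mathrm b_2}[l]_n-L^{\mathrm b_2}[k]_n .$$
   Context: Let $\omega=\{\omega_{i,j}:(i,j)\in\mathbb Z^2,\ i+j>0\}$ be i.i.d. exponential random variables with parameter $1$. Write $(i,j)\le(k,l)$ if $i\le k$ and $j\le l$. An up-right path from $\mathbf x$ to $\mathbf y$ is a sequence $\mathbf x=\mathbf x_0,\dots,\mathbf x_m=\mathbf y$ with increments in $\{(1,0),(0,1)\}$; its passage time is $\sum_{i=1}^m\omega_{\mathbf x_i}$ (starting point excluded). For $\mathbf x=(i,j)\le\mathbf y$ with $i+j\ge0$, $L(\mathbf x,\mathbf y)$ is the maximal passage time over up-right paths from $\mathbf x$ to $\mathbf y$. Set $L_k(\mathbf x)=L((k,-k),\mathbf x)$, $C^{\mathbf x}=\{k\in\mathbb Z:(k,-k)\le\mathbf x\}$ and $[k]_n:=(n+k,n-k)$. A profile is a function $\mathrm b:\mathbb Z\to\mathbb R\cup\{-\infty\}$ with $\mathrm b(0)=0$. Define $L^{\mathrm b}(\mathbf x):=\max_{k\in C^{\mathbf x}}\{\mathrm b(k)+L_k(\mathbf x)\}$ and the exit point $Z^{\mathrm b}(\mathbf x)$ as the largest $k\in C^{\mathbf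 x}$ attaining this maximum. *)

(* Defs.v *)
From HB Require Import structures.
From mathcomp Require Import all_boot all_order all_algebra.
From mathcomp Require Export constructive_ereal.
Set Implicit Arguments. Unset Strict Implicit. Unset Printing Implicit Defensive.
Import Order.TTheory GRing.Theory Num.Theory.
Local Open Scope ring_scope.

Section LPP.
Variable R : realDomainType.
(* environment: omega i j = weight at site (i,j) (only sites with i+j>0 are used) *)
Variable omega : int -> int -> R.

Definition step (p : int * int) (e : bool) : int * int :=
  if e then (p.1 + 1, p.2)%R else (p.1, p.2 + 1)%R.

(* passage time of the path from x with step sequence s, starting point excluded *)
Definition passage (x : int * int) (s : seq bool) : R :=
  (\sum_(p <- scanl step x s) omega p.1 p.2)%R.

(* last-passage time L(x,y): maximum over all up-right paths from x to y
   (paths = step sequences of length |y1-x1|+|y2-x2| with |y1-x1| east steps);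
   -oo if x is not <= y *)
Definition plen (x y : int * int) : nat :=
  (absz (y.1 - x.1)%R + absz (y.2 - x.2)%R)%N.

Definition Lpp (x y : int * int) : \bar R :=
  if ((x.1 <= y.1) && (x.2 <= y.2))%R then
    \big[Order.max/-oo%E]_(s : (plen x y).-tuple bool
                          | (count id s == absz (y.1 - x.1)%R)%N)
      (passage x s)%:E
  else -oo%E.

Definition Lk (k : int) (x : int * int) : \bar R := Lpp (k, (- k)%R) x.

(* C^x = { k : (k,-k) <= x } = [-x2, x1], listed in increasing order *)
Definition Cx (x : int * int) : seq int :=
  if (0 <= x.1 + x.2)%R then
    [seq (- x.2 + m%:Z)%R | m <- iota 0 (absz (x.1 + x.2)).+1]
  else [::].

Definition Lb (b : int -> \bar R) (x : int * int) : \bar R :=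
  \big[Order.max/-oo%E]_(k <- Cx x) (b k + Lk k x)%E.

(* Z^b(x) = largest k in C^x attaining the maximum *)
Definition Zb (b : int -> \bar R) (x : int * int) : int :=
  last 0%R [seq k <- Cx x | (b k + Lk k x)%E == Lb b x].

End LPP.

Definition is_profile (R : realDomainType) (b : int -> \bar R) : Prop :=
  b 0 = 0%E /\ forall k, b k != +oo%E.

Definition pt (n k : int) : int * int := (n + k, n - k)%R.

(* Main.v *)
Require Import Defs.
From HB Require Import structures.
From mathcomp Require Import all_boot all_order all_algebra.
From mathcomp Require Import constructive_ereal.
From mathcomp Require Import zify ring lra.
Import Order.TTheory GRing.Theory Num.Theory.
Local Open Scope ring_scope.

Definition endp (x : int * int) (s : seq bool) := foldl step x s.

Lemma endpE x s : endp x s = (x.1 + (count id s)%:Z, x.2 + (size s - count id s)%:Z).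
Proof.
elim: s x => [|e s IH] x /=; first by case: x => a b /=; rewrite !addr0.
rewrite /endp /= -/(endp _ _) IH /step; have := count_size id s.
by case: e => /= h; congr pair; lia.
Qed.

Lemma endp_cat x a b : endp x (a ++ b) = endp (endp x a) b.
Proof. by rewrite /endp foldl_cat. Qed.

Lemma endp_le {x s y} : endp x s = y -> (x.1 <= y.1) /\ (x.2 <= y.2).
Proof. rewrite endpE => <- /=; lia. Qed.

Lemma passage_cat (R : realDomainType) (om : int -> int -> R) x a b :
  passage om x (a ++ b) = passage om x a + passage om (endp x a) b.
Proof. by rewrite /passage scanl_cat big_cat. Qed.

Section Big.
Variable R : realDomainType.
Local Open Scope ereal_scope.

Lemma bigmax_ge (I : eqType) (r : seq I) (P : pred I) (F : I -> \bar R) i :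
  i \in r -> P i -> F i <= \big[Order.max/-oo]_(j <- r | P j) F j.
Proof.
elim: r => [//|a r IH]; rewrite inE big_cons => /orP [/eqP<-|ir] Pi.
  by rewrite Pi le_max lexx.
case: ifP => _; last exact: IH.
by rewrite le_max IH ?orbT.
Qed.

Lemma bigmax_att (I : eqType) (r : seq I) (P : pred I) (F : I -> \bar R) :
  \big[Order.max/-oo]_(j <- r | P j) F j != -oo ->
  exists j, [/\ j \in r, P j & \big[Order.max/-oo]_(j <- r | P j) F j = F j].
Proof.
elim: r => [|a r IH]; first by rewrite big_nil eqxx.
rewrite big_cons; case: ifP => Pa.
  rewrite /Order.max; case: ifP => _.
    move=> /IH [j [jr Pj e]]; exists j; by rewrite inE jr orbT.
  move=> _; exists a; by rewrite inE eqxx.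
move=> /IH [j [jr Pj e]]; exists j; by rewrite inE jr orbT.
Qed.
End Big.

Section Lpp.
Variable R : realDomainType.
Variable om : int -> int -> R.
Local Open Scope ereal_scope.

Lemma Lpp_ge x s y : endp x s = y -> (passage om x s)%:E <= Lpp om x y.
Proof.
move=> E; have [h1 h2] := endp_le E.
move: E; rewrite endpE => E.
rewrite /Lpp h1 h2 /=.
have hs : size s == plen x y.
  rewrite /plen -E /=; have := count_size id s; move=> ?; apply/eqP; lia.
have -> : passage om x s = passage om x (Tuple hs) by [].
apply: bigmax_ge; first exact: mem_index_enum.
rewrite /= -E /=; apply/eqP; lia.
Qed.

Lemma Lpp_att x y : Lpp om x y != -oo ->
  exists s, endp x s = y /\ Lpp om x y = (passage om x s)%:E.
Proof.
rewrite /Lpp; case: ifP => [/andP [h1 h2]|]; last by rewrite eqxx.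
move=> /bigmax_att [s [_ /eqP hc e]]; exists (tval s); split=> //.
rewrite endpE hc size_tuple /plen [RHS]surjective_pairing.
congr pair; lia.
Qed.
End Lpp.

Lemma mem_Cx (k a c : int) : k <= a -> - k <= c -> k \in Cx (a, c).
Proof.
move=> h1 h2; rewrite /Cx ifT; last by rewrite /=; lia.
apply/mapP; exists (absz (k + c)); last by rewrite /=; lia.
rewrite mem_iota; apply/andP; split=> //; rewrite /=; lia.
Qed.

Section Zb.
Variable R : realDomainType.
Variable om : int -> int -> R.
Local Open Scope ereal_scope.

Lemma Lb_ge b x k : k \in Cx x -> b k + Lk om k x <= Lb om b x.
Proof. by move=> h; rewrite /Lb; apply: bigmax_ge. Qed.

Lemma Zb_spec b x : Lb om b x != -oo ->
  Zb om b x \in Cx x /\ b (Zb om b x) + Lk om (Zb om b x) x = Lb om b x.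
Proof.
move=> /bigmax_att [j [jr _ e]].
rewrite /Zb.
have mf : forall y, y \in [seq k <- Cx x | b k + Lk om k x == Lb om b x] =
   (b y + Lk om y x == Lb om b x) && (y \in Cx x) by move=> y; rewrite mem_filter.
have : j \in [seq k <- Cx x | b k + Lk om k x == Lb om b x].
  by rewrite mf jr /Lb e eqxx.
move: mf; case: [seq _ <- _ | _] => [//|a s] mf _.
have := mem_last a s; rewrite mf => /andP [/eqP e2 h]; by [].
Qed.
End Zb.

Lemma ivt (f : nat -> int) N : f 0%N <= 0 -> 0 <= f N ->
  (forall t, f t.+1 <= f t + 1) -> exists2 t, (t <= N)%N & f t = 0.
Proof.
move=> h0 hN hs; elim: N hN => [|N IH] hN; first by exists 0%N => //; lia.
case: (leP 0 (f N)) => h.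
  by have [t tN ft] := IH h; exists t => //; lia.
exists N.+1 => //; have := hs N; lia.
Qed.

Arguments Zb_spec {R om b x}.
Arguments Lpp_att {R om x y}.
Arguments Lpp_ge {R} om {x s y}.
Arguments Lb_ge {R} om b {x k}.

Lemma arith (R : realDomainType) (a1 a2 c d p1 q1 p2 q2 : R) :
  a1 + (p1 + q2) <= c -> a2 + (p2 + q1) <= d ->
  a1 + (p1 + q1) - c <= d - (a2 + (p2 + q2)).
Proof. move=> *; lra. Qed.

Lemma fin_nn {R : realDomainType} {x : \bar R} : x \is a fin_num -> x != -oo%E.
Proof. by rewrite fin_numE => /andP []. Qed.

Lemma count_take_step (s : seq bool) t :
  (count id (take t s) <= count id (take t.+1 s) <= count id (take t s) + 1)%N.
Proof.
rewrite -addn1 takeD count_cat; case: (drop t s) => [|e r] /=; rewrite ?take0 /=; lia.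
Qed.

Theorem lemma1 (R : realDomainType) (omega : int -> int -> R)
    (b1 b2 : int -> \bar R) (k l n : int) :
  is_profile b1 -> is_profile b2 ->
  (k <= l)%R -> (1 <= n)%R ->
  Lb omega b1 (pt n l) \is a fin_num -> Lb omega b1 (pt n k) \is a fin_num ->
  Lb omega b2 (pt n l) \is a fin_num -> Lb omega b2 (pt n k) \is a fin_num ->
  (Zb omega b1 (pt n l) <= Zb omega b2 (pt n k))%R ->
  (Lb omega b1 (pt n l) - Lb omega b1 (pt n k)
     <= Lb omega b2 (pt n l) - Lb omega b2 (pt n k))%E.
Proof.
move=> _ _ hkl _ f1l f1k f2l f2k.
set z1 := Zb omega b1 (pt n l); set z2 := Zb omega b2 (pt n k) => hz.
have [z1in e1] := Zb_spec (fin_nn f1l).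
have [z2in e2] := Zb_spec (fin_nn f2k).
rewrite -/z1 in z1in e1; rewrite -/z2 in z2in e2.
have := f1l; rewrite -e1 fin_numD => /andP [fb1 fL1].
have := f2k; rewrite -e2 fin_numD => /andP [fb2 fL2].
have [s1 [E1 P1]] := Lpp_att (fin_nn fL1).
have [s2 [E2 P2]] := Lpp_att (fin_nn fL2).
have cs1 := count_size id s1; have cs2 := count_size id s2.
have [hc1 hs1] : (z1 + (count id s1)%:Z = n + l) /\ (size s1)%:Z = 2 * n.
  by move: E1; rewrite endpE /pt => [[h1 h2]]; split; lia.
have [hc2 hs2] : (z2 + (count id s2)%:Z = n + k) /\ (size s2)%:Z = 2 * n.
  by move: E2; rewrite endpE /pt => [[h1 h2]]; split; lia.
have hsz : size s2 = size s1 by lia.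
pose f t := (z1 + (count id (take t s1))%:Z) - (z2 + (count id (take t s2))%:Z).
have [t tN ft] : exists2 t, (t <= size s1)%N & f t = 0.
  apply: ivt.
  - by rewrite /f !take0 /=; lia.
  - by rewrite /f -{2}hsz !take_size; lia.
  - move=> t; rewrite /f; have := count_take_step s1 t; have := count_take_step s2 t; lia.
set A1 := take t s1; set B1 := drop t s1; set A2 := take t s2; set B2 := drop t s2.
have sA1 : size A1 = t by rewrite size_takel.
have sA2 : size A2 = t by rewrite size_takel // hsz.
have cA1 := count_size id A1; have cA2 := count_size id A2.
set v := endp (z1, - z1) A1.
have hv : endp (z2, - z2) A2 = v.
  rewrite /v !endpE sA1 sA2 /=; move: ft; rewrite /f -/A1 -/A2 => ft; congr pair; lia.
have es1 : s1 = A1 ++ B1 by rewrite cat_take_drop.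
have es2 : s2 = A2 ++ B2 by rewrite cat_take_drop.
have Ep : endp (z1, - z1) (A1 ++ B2) = pt n k by rewrite endp_cat -/v -hv -endp_cat -es2.
have Eq : endp (z2, - z2) (A2 ++ B1) = pt n l by rewrite endp_cat hv /v -endp_cat -es1.
have H3 := Lpp_ge omega Ep; have H4 := Lpp_ge omega Eq.
have [le1 le2] := endp_le Ep; have [le3 le4] := endp_le Eq.
have G3 := @Lb_ge _ omega b1 (pt n k) z1 (mem_Cx _ _ _ le1 le2).
have G4 := @Lb_ge _ omega b2 (pt n l) z2 (mem_Cx _ _ _ le3 le4).
rewrite !passage_cat -/v hv in H3 H4.
rewrite es1 passage_cat -/v in P1.
rewrite es2 passage_cat hv in P2.
rewrite /Lk P1 P2 -(fineK fb1) -(fineK fb2) -!EFinD.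
rewrite /Lk -(fineK fb1) -(fineK fb2) in G3 G4.
have G3' := le_trans (leeD2l _ H3) G3.
have G4' := le_trans (leeD2l _ H4) G4.
rewrite -(fineK f1k) -(fineK f2l) -!EFinD in G3' G4' *.
rewrite lee_fin; rewrite !lee_fin in G3' G4'.
exact: arith G3' G4'.
Qed.
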